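(* Let $\mathfrak g$ be any complex simple Lie algebra with a choice of positive roots $\Sigma^+$. Then, as a rational function, $$\sum_{\substack{\beta,\gamma\in\Sigma^+\\ \beta\neq\gamma}}\frac{\langle\beta,\gamma\rangle}{\beta\,\gamma}=0.$$
   Context: Roots are regarded as linear functions (on the real Cartan subspace, equivalently on its dual via the inner product), so $\frac{\langle\beta,\gamma\rangle}{\beta\gamma}$ is a rational function whose numerator is the constant $\langle\beta,\gamma\rangle$, the inner product on roots induced by the Killing form. *)

(* Defs.v *)
From HB Require Import structures.
From mathcomp Require Import all_boot all_order all_algebra.
From mathcomp Require Import reals.
Set Implicit Arguments. Unset Strict Implicit. Unset Printing Implicit Defensive.
Import Order.TTheory GRing.Theory Num.Theory.
Local Open Scope ring_scope.

Definition dot (R : realType) (n : nat) (u v : 'rV[R]_n) : R := (u *m v^T) 0 0.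

Definition root_system (R : realType) (n : nat) (Phi : seq 'rV[R]_n) : Prop :=
  [/\ uniq Phi,
      (0 : 'rV[R]_n) \notin Phi,
      (<<Phi>>%VS = fullv),
      (forall (c : R) al, al \in Phi -> c *: al \in Phi -> c = 1 \/ c = -1) &
      (forall al be, al \in Phi -> be \in Phi ->
         be - (2 * dot be al / dot al al) *: al \in Phi /\
         (2 * dot be al / dot al al) \is a Num.int)].

Definition irreducible_rs (R : realType) (n : nat) (Phi : seq 'rV[R]_n) : Prop :=
  forall P : pred 'rV[R]_n,
    (forall al be, al \in Phi -> be \in Phi -> P al -> ~~ P be -> dot al be = 0) ->
    (forall al, al \in Phi -> P al) \/ (forall al, al \in Phi -> ~~ P al).

Definition positive_roots (R : realType) (n : nat) (Phi : seq 'rV[R]_n)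
  (f : 'rV[R]_n) : seq 'rV[R]_n := [seq al <- Phi | 0 < dot f al].

Definition regular (R : realType) (n : nat) (Phi : seq 'rV[R]_n) (f : 'rV[R]_n) :=
  forall al, al \in Phi -> dot f al != 0.

(* Main.v *)
Require Import Defs.
From HB Require Import structures.
From mathcomp Require Import all_boot all_order all_algebra.
From mathcomp Require Import reals.
From mathcomp Require Import ring lra zify.
Import Order.TTheory GRing.Theory Num.Theory.
Local Open Scope ring_scope.

Set Implicit Arguments.
Unset Strict Implicit.
Section Dot.
Context (R : realType) (n : nat).
Implicit Types u v w : 'rV[R]_n.

Lemma dotE u v : dot u v = \sum_j u 0 j * v 0 j.
Proof. by rewrite /dot !mxE; apply: eq_bigr => j _; rewrite mxE. Qed.

Lemma dotC u v : dot u v = dot v u.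
Proof. by rewrite !dotE; apply: eq_bigr => j _; rewrite mulrC. Qed.

Lemma dotDr u v w : dot u (v + w) = dot u v + dot u w.
Proof. by rewrite !dotE -big_split; apply: eq_bigr => j _; rewrite mxE mulrDr. Qed.

Lemma dotZr u (c : R) v : dot u (c *: v) = c * dot u v.
Proof. by rewrite !dotE mulr_sumr; apply: eq_bigr => j _; rewrite mxE mulrCA. Qed.

Lemma dotNr u v : dot u (- v) = - dot u v.
Proof. by rewrite -scaleN1r dotZr mulN1r. Qed.

Lemma dotBr u v w : dot u (v - w) = dot u v - dot u w.
Proof. by rewrite dotDr dotNr. Qed.

Lemma dotDl u v w : dot (v + w) u = dot v u + dot w u.
Proof. by rewrite dotC dotDr !(dotC u). Qed.
Lemma dotZl u (c : R) v : dot (c *: v) u = c * dot v u.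
Proof. by rewrite dotC dotZr dotC. Qed.
Lemma dotNl u v : dot (- v) u = - dot v u.
Proof. by rewrite dotC dotNr dotC. Qed.
Lemma dotBl u v w : dot (v - w) u = dot v u - dot w u.
Proof. by rewrite dotC dotBr !(dotC u). Qed.

Lemma dot_self_eq0 v : dot v v = 0 -> v = 0.
Proof.
rewrite dotE => H; apply/rowP => j; rewrite mxE.
have hp : forall i : 'I_n, predT i -> 0 <= v 0 i * v 0 i.
  by move=> i _; rewrite -expr2 sqr_ge0.
have := psumr_eq0P hp H.
move=> /(_ j isT) /eqP.
by rewrite mulf_eq0 orbb => /eqP.
Qed.

Lemma avoid (s : seq R) : exists c : R, 0 < c /\ c \notin s.
Proof.
exists (1 + \sum_(a <- s) `|a|); split.
  by apply: ltr_pwDl => //; apply: sumr_ge0 => a _.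
have H : forall a, a \in s -> `|a| <= \sum_(a <- s) `|a|.
  elim: s => [//|b s IH] a; rewrite in_cons big_cons => /orP [/eqP ->|/IH h].
    by rewrite lerDl sumr_ge0.
  by rewrite (le_trans h) // lerDr.
apply/negP => /H; rewrite -[X in _ <= X]add0r ler_norml => /andP [_].
by rewrite lerD2r ler10.
Qed.

Lemma generic (vs : seq 'rV[R]_n) :
  exists y, forall v, v \in vs -> v != 0 -> dot v y != 0.
Proof.
elim: vs => [|v vs [y Hy]]; first by exists 0.
have [v0|vn0] := eqVneq v 0.
  by exists y => w; rewrite in_cons => /orP [/eqP ->|/Hy]; first by rewrite v0 eqxx.
have [hvy|hvy] := eqVneq (dot v y) 0; last first.
  by exists y => w; rewrite in_cons => /orP [/eqP ->|/Hy].
have [c [c0 hc]] := avoid [seq - dot w y / dot w v | w <- vs].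
exists (y + c *: v) => w; rewrite in_cons => /orP [/eqP -> _|wi wn0].
  rewrite dotDr hvy add0r dotZr mulf_neq0 //; first by rewrite gt_eqF.
  by apply/eqP => /dot_self_eq0; apply/eqP.
rewrite dotDr dotZr; apply/eqP => H.
have [wv0|wvn0] := eqVneq (dot w v) 0.
  by move: H; rewrite wv0 mulr0 addr0; apply/eqP/Hy.
move/negP: hc; apply; apply/mapP; exists w => //.
have -> : dot w y = - (c * dot w v) by apply/eqP; rewrite -addr_eq0 H.
by field.
Qed.

End Dot.

Section Roots.
Context (R : realType) (n : nat) (Phi : seq 'rV[R]_n) (f : 'rV[R]_n).
Context (HR : root_system Phi) (Hreg : regular Phi f).
Local Notation L := (positive_roots Phi f).

Lemma memL g : (g \in L) = (g \in Phi) && (0 < dot f g).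
Proof. by rewrite mem_filter andbC. Qed.

Lemma uniqL : uniq L.
Proof. by case: HR => u *; rewrite filter_uniq. Qed.

Lemma root_neq0 b : b \in Phi -> b != 0.
Proof. case: HR => _ h0 _ _ _ hb; apply/eqP => e; move: h0; by rewrite -e hb. Qed.

Lemma dd_neq0 b : b \in Phi -> dot b b != 0.
Proof. by move/root_neq0; apply: contra => /eqP/dot_self_eq0 ->. Qed.

Definition refl (b v : 'rV[R]_n) := v - (2 * dot v b / dot b b) *: b.

Lemma refl_in b g : b \in Phi -> g \in Phi -> refl b g \in Phi.
Proof. by case: HR => _ _ _ _ h hb hg; case: (h b g hb hg). Qed.

Lemma neg_in b : b \in Phi -> - b \in Phi.
Proof.
move=> hb; have := refl_in hb hb; rewrite /refl.
have -> : 2 * dot b b / dot b b = 2 by rewrite mulfK ?dd_neq0.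
by rewrite scaler_nat mulr2n opprD addrA subrr add0r.
Qed.

Lemma parallel b g c : b \in L -> g \in L -> g = c *: b -> g = b.
Proof.
rewrite !memL => /andP [hb fb] /andP [hg fg] e.
case: HR => _ _ _ h _; have [c1|cm1] := h c b hb (etrans (f_equal (fun v => v \in Phi) (esym e)) hg).
  by rewrite e c1 scale1r.
by move: fg; rewrite e cm1 scaleN1r dotNr oppr_gt0 ltNge (ltW fb).
Qed.

Lemma refl_dot b v : b \in Phi -> dot (refl b v) b = - dot v b.
Proof.
move=> hb; rewrite /refl dotBl dotZl.
have := dd_neq0 hb => h; by field.
Qed.

Lemma reflK b v : b \in Phi -> refl b (refl b v) = v.
Proof.
move=> hb; rewrite {1}/refl refl_dot // /refl.
by rewrite mulrN mulNr scaleNr opprK subrK.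
Qed.

Lemma reflN b v : refl b (- v) = - refl b v.
Proof. by rewrite /refl dotNl mulrN mulNr scaleNr opprD. Qed.

Lemma refl_sum b z : b \in L -> dot b z = 0 ->
  \sum_(g <- L | g != b) dot b g / dot g z = 0.
Proof.
move=> hbL hbz; have hb : b \in Phi by move: hbL; rewrite memL => /andP [].
pose s := refl b.
pose sig g := if 0 < dot f (s g) then s g else - s g.
pose L' := [seq g <- L | g != b].
pose h g := dot b g / dot g z.
have hL' g : g \in L' -> (g \in Phi) && (0 < dot f g) && (g != b).
  by rewrite mem_filter memL andbC.
have sigin g : g \in L' -> sig g \in L'.
  move=> /hL' /andP [/andP [hg fg] gb].
  have sgin : s g \in Phi by apply: refl_in.
  have sigPhi : sig g \in Phi /\ 0 < dot f (sig g).
    rewrite /sig; case: ifP => // hf; split => //; first by apply: neg_in.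
    rewrite dotNr oppr_gt0; have := Hreg sgin.
    by rewrite lt_neqAle => ->; rewrite leNgt hf.
  case: sigPhi => sp sf.
  rewrite mem_filter memL sp sf !andbT; apply/eqP => e.
  move/negP: gb; apply; apply/eqP.
  have gL : g \in L by rewrite memL hg.
  apply: (parallel (c := if 0 < dot f (s g) then 1 + 2 * dot g b / dot b b
                         else 2 * dot g b / dot b b - 1) hbL gL).
  move: e; rewrite /sig /s /refl; set c := 2 * dot g b / dot b b.
  case: ifP => _ e.
    by rewrite scalerDl scale1r -[in LHS](subrK (c *: b) g) e.
  have e' := congr1 (fun v => - v) e; rewrite /= opprK in e'.
  by rewrite scalerBl scale1r -[in LHS](subrK (c *: b) g) e' addrC.
have sigK g : g \in L' -> sig (sig g) = g.
  move=> /hL' /andP [/andP [hg fg] _].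
  rewrite {2}/sig; case: ifP => hf; rewrite /sig.
    by rewrite /s reflK // fg.
  by rewrite /s reflN reflK // dotNr oppr_gt0 ltNge (ltW fg) /= opprK.
have hsig g : h (sig g) = - h g.
  have e : h (s g) = - h g.
    rewrite /h /s /refl dotBl dotZl hbz mulr0 subr0 dotBr dotZr dotC.
    have := dd_neq0 hb => hd.
    rewrite -[RHS]mulNr; congr (_ * _); rewrite mulfVK //; ring.
  by rewrite /sig; case: ifP => // _; rewrite /h dotNr dotNl invrN mulrNN -e.
have pe : perm_eq (map sig L') L'.
  apply: uniq_perm.
  - rewrite map_inj_in_uniq; first by rewrite filter_uniq // uniqL.
    by move=> g1 g2 h1 h2 e; rewrite -(sigK g1) // e sigK.
  - by rewrite filter_uniq // uniqL.
  - move=> g; apply/mapP/idP => [[g' g'in ->]|gin]; first exact: sigin.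
    by exists (sig g); [apply: sigin | rewrite sigK].
rewrite -big_filter -/L'.
have : \sum_(g <- L') h g = - \sum_(g <- L') h g.
  rewrite -[LHS](perm_big _ pe) big_map -sumrN.
  by apply: eq_bigr => g _; rewrite hsig.
move/eqP; rewrite -subr_eq0 opprK -mulr2n -mulr_natr mulf_eq0 pnatr_eq0 orbF.
by move/eqP.
Qed.

End Roots.
Unset Implicit Arguments.

Lemma bigD1_seqP (Rr : Type) (idx : Rr) (op : Monoid.com_law idx) (I : eqType)
  (r : seq I) (P : pred I) (F : I -> Rr) j :
  j \in r -> uniq r -> P j ->
  \big[op/idx]_(i <- r | P i) F i = op (F j) (\big[op/idx]_(i <- r | P i && (i != j)) F i).
Proof.
move=> jr ur Pj.
rewrite -big_filter (bigD1_seq j) ?mem_filter ?Pj ?filter_uniq //.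
by rewrite big_filter_cond.
Qed.
Arguments bigD1_seqP {Rr idx op I r P F} j _ _ _.

Section Core.
Context (F : fieldType) (T : eqType) (L : seq T) (d : T -> T -> F) (e : T -> F).
Context (hU : uniq L) (dC : forall a b, d a b = d b a).

Definition Pv := \sum_(b <- L) \sum_(g <- L | g != b)
   d b g * \prod_(k <- L | (k != b) && (k != g)) e k.

Lemma core_zero : (forall k, k \in L -> e k != 0) ->
  Pv = (\prod_(k <- L) e k) * \sum_(b <- L) \sum_(g <- L | g != b) d b g / (e b * e g).
Proof.
move=> he; rewrite /Pv big_distrr; apply: eq_big_seq => b hb /=.
rewrite big_distrr /= big_seq_cond [RHS]big_seq_cond; apply: eq_bigr => g /andP [hg gb].
rewrite [in RHS](bigD1_seq b) //= [in RHS](bigD1_seqP g hg) //=.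
have := he b hb; have := he g hg => h1 h2.
by field; rewrite h1 h2.
Qed.

Lemma core_root b0 : b0 \in L -> e b0 = 0 -> (forall g, g \in L -> g != b0 -> e g != 0) ->
  \sum_(g <- L | g != b0) d b0 g / e g = 0 -> Pv = 0.
Proof.
move=> hb0 eb0 he hs; rewrite /Pv (bigD1_seq b0) //=.
set F0 := \sum_(g <- L | g != b0) _.
have -> : \sum_(b <- L | b != b0) \sum_(g <- L | g != b)
     d b g * \prod_(k <- L | (k != b) && (k != g)) e k = F0.
  rewrite /F0 big_seq_cond [RHS]big_seq_cond; apply: eq_bigr => b /andP [hb bb0].
  rewrite (bigD1_seqP b0 hb0) //=; last by rewrite eq_sym.
  rewrite [X in _ + X]big1_seq ?addr0.
    rewrite dC; congr (_ * _); apply: eq_bigl => k; by rewrite andbC.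
  move=> g /andP [/andP [gb gb0] hg].
  rewrite (bigD1_seqP b0 hb0) //=.
    by rewrite eb0 mul0r mulr0.
  by rewrite eq_sym bb0 eq_sym gb0.
have -> : F0 = (\prod_(k <- L | k != b0) e k) * \sum_(g <- L | g != b0) d b0 g / e g.
  rewrite /F0 big_distrr /= big_seq_cond [RHS]big_seq_cond; apply: eq_bigr => g /andP [hg gb].
  rewrite [in RHS](bigD1_seqP g hg) //=.
  have := he g hg gb => h1.
  by field.
by rewrite hs mulr0 addr0.
Qed.

End Core.
Arguments Pv {F T} L d e.
Arguments core_root {F T L d e} hU dC {b0} _ _ _ _.
Arguments core_zero {F T L d e} hU dC.

Lemma size_prod_lin (R : fieldType) (T : Type) (s : seq T) (Q : pred T) (l : T -> {poly R}) :
  (forall k, leq (size (l k)) 2) ->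
  leq (size (\prod_(k <- s | Q k) l k)) (count Q s).+1.
Proof.
move=> hl; elim: s => [|a s IH]; first by rewrite big_nil size_poly1.
rewrite big_cons /=; case: ifP => hQ /=; last by rewrite add0n.
apply: (leq_trans (size_polyMleq _ _)); have := hl a; move: IH.
rewrite add1n; case: (size (l a)) => [|[|[|m]]] //=; lia.
Qed.

Arguments size_prod_lin {R T} s Q l _.
Unset Implicit Arguments.

Theorem mainTheorem17 (R : realType) (n : nat) (Phi : seq 'rV[R]_n)
  (f : 'rV[R]_n) :
  (0 < n)%N -> root_system Phi -> irreducible_rs Phi -> regular Phi f ->
  forall x : 'rV[R]_n,
    (forall be, be \in positive_roots Phi f -> dot be x != 0) ->
    \sum_(be <- positive_roots Phi f)
      \sum_(ga <- positive_roots Phi f | ga != be)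
        dot be ga / (dot be x * dot ga x) = 0.
Proof.
move=> _ HR _ Hreg x Hx.
set L := positive_roots Phi f.
have uL : uniq L := uniqL f HR.
have hLPhi b : b \in L -> b \in Phi by rewrite memL => /andP [].
have [y Hy] := generic (L ++ [seq dot b x *: g - dot g x *: b | b <- L, g <- L]).
have hy1 b : b \in L -> dot b y != 0.
  move=> hb; apply: Hy; first by rewrite mem_cat hb.
  exact: (root_neq0 HR (hLPhi b hb)).
have hy2 b g : b \in L -> g \in L -> b != g -> dot b x * dot g y - dot g x * dot b y != 0.
  move=> hb hg bg.
  have -> : dot b x * dot g y - dot g x * dot b y = dot (dot b x *: g - dot g x *: b) y.
    by rewrite dotBl !dotZl.
  apply: Hy; first by rewrite mem_cat (allpairs_f (fun b g => dot b x *: g - dot g x *: b)) ?orbT.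
  apply/eqP => e; move/negP: bg; apply; apply/eqP; apply/esym.
  apply: (parallel HR (c := dot g x / dot b x) hb hg).
  have hbx := Hx b hb.
  move/eqP: e; rewrite subr_eq0 => /eqP e.
  by rewrite mulrC -scalerA -e scalerA mulVf // scale1r.
pose l k : {poly R} := (dot k x)%:P + (dot k y)%:P * 'X.
have hl k s : (l k).[s] = dot k (x + s *: y).
  by rewrite /l hornerD hornerC hornerMX hornerC dotDr dotZr mulrC.
pose Pp := \sum_(b <- L) \sum_(g <- L | g != b)
   dot b g *: \prod_(k <- L | (k != b) && (k != g)) l k.
have hP s : Pp.[s] = Pv L (@dot R n) (fun k => dot k (x + s *: y)).
  rewrite /Pp /Pv horner_sum; apply: eq_bigr => b _.
  rewrite horner_sum; apply: eq_bigr => g _.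
  rewrite hornerZ horner_prod; congr (_ * _); apply: eq_bigr => k _; exact: hl.
pose r k := - dot k x / dot k y.
have hroot b : b \in L -> dot b (x + r b *: y) = 0.
  move=> hb; rewrite dotDr dotZr /r; have := hy1 b hb => h; by field.
have hnz b g : b \in L -> g \in L -> g != b -> dot g (x + r b *: y) != 0.
  move=> hb hg gb; have bg : b != g by rewrite eq_sym.
  have := hy2 b g hb hg bg.
  have h := hy1 b hb.
  have -> : dot g (x + r b *: y) =
      - (dot b x * dot g y - dot g x * dot b y) / dot b y.
    by rewrite dotDr dotZr /r; field.
  by move=> hne; rewrite mulf_neq0 ?oppr_eq0 ?invr_eq0.
have P0 : Pp = 0.
  apply/eqP; apply: contraT => hP0.
  have := max_poly_roots hP0 (rs := map r L).
  have -> : all (root Pp) (map r L).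
    apply/allP => s /mapP [b hb ->]; rewrite /root hP.
    apply/eqP; apply: (core_root uL (@dotC R n) hb (hroot b hb)).
      by move=> g hg gb; apply: hnz.
    exact: (refl_sum HR Hreg hb (hroot b hb)).
  have -> : uniq (map r L).
    rewrite map_inj_in_uniq // => b g hb hg e.
    apply/eqP; apply: contraT => bg.
    have gb : g != b by rewrite eq_sym.
    by have := hnz b g hb hg gb; rewrite e hroot // eqxx.
  move=> /(_ isT isT); rewrite size_map.
  have : (size Pp <= size L)%N.
    rewrite /Pp big_seq; apply: (big_ind (fun p : {poly R} => size p <= size L)%N).
    - by rewrite size_poly0.
    - by move=> p q hp hq; apply: (leq_trans (size_polyD _ _)); rewrite geq_max hp hq.
    move=> b hb; apply: (big_ind (fun p : {poly R} => size p <= size L)%N).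
    - by rewrite size_poly0.
    - by move=> p q hp hq; apply: (leq_trans (size_polyD _ _)); rewrite geq_max hp hq.
    have hl2 k : leq (size (l k)) 2.
      rewrite /l; apply: (leq_trans (size_polyD _ _)); rewrite geq_max.
      rewrite size_polyC (leq_trans (leq_b1 _)) //=; apply: (leq_trans (size_polyMleq _ _)).
      by rewrite size_polyX size_polyC; case: (_ != 0).
    move=> g _; apply: (leq_trans (size_scale_leq _ _)).
    apply: (leq_trans (size_prod_lin _ _ _ hl2)).
    rewrite -(count_predC (fun k => (k != b) && (k != g)) L) -addn1 leq_add2l.
    by rewrite -has_count; apply/hasP; exists b => //=; rewrite eqxx.
  by move=> h1 h2; have := leq_ltn_trans h1 h2; rewrite ltnn.
have := hP 0; rewrite P0 horner0 scale0r addr0 core_zero //.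
  move/esym/eqP; rewrite mulf_eq0 => /orP [|/eqP //].
  move=> h; exfalso; move: h; apply/negP.
  by rewrite prodf_seq_neq0; apply/allP => k hk; apply: Hx.
Qed.
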